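(* Let $q$ be an odd prime power, $m\geq 2$, $n=\frac{q^m+1}{2}$, and suppose $q^m\equiv 1\pmod 4$. Let $i$ be an odd integer with $\frac{q^m-1}{2}-q^{m-1}<i<n$ of the form $i=\frac{q-3}{2}q^{m-1}+i_{m-2}q^{m-2}+\cdots+i_1q+i_0$, where $i_0,i_1,\ldots,i_{m-2}\in\{\frac{q-3}{2},\frac{q-1}{2},\frac{q+1}{2}\}$. Then $i$ is not a coset leader modulo $q^m+1$.
   Context: The $q$-cyclotomic coset of $i$ modulo $q^m+1$ is $\{i,iq,iq^2,\ldots\}\bmod(q^m+1)$; its smallest element is its coset leader, and $i$ is called a coset leader if it is the coset leader of its own coset. *)

(* Defs.v *)
From mathcomp Require Import all_boot.
Set Implicit Arguments. Unset Strict Implicit. Unset Printing Implicit Defensive.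

Definition prime_power (q : nat) : Prop :=
  exists p k, prime p /\ 0 < k /\ q = p ^ k.

Definition cyc_coset (q N i : nat) : nat -> Prop :=
  fun x => exists j, x = (i * q ^ j) %% N.

Definition is_coset_leader (q N i : nat) : Prop :=
  cyc_coset q N i (i %% N) /\
  forall x, cyc_coset q N i x -> i %% N <= x.

(* Main.v *)
From Stdlib Require Import ZArith Lia.
Require Import Defs.
From mathcomp Require Import all_boot.
From mathcomp Require Import zify.

Open Scope Z_scope.
Lemma core (q N F : Z) (x : nat -> Z) (m : nat) :
  (exists b, q = 2*b+1 /\ 0 <= b)%Z -> (exists c, N = 4*c+2)%Z -> (0 < F)%Z -> (exists g, F = 2*g)%Z ->
  (q*F < N)%Z -> ((q+1)*F < 2*N)%Z ->
  x 0%nat = F -> x m = (-F)%Z ->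
  (forall k, -F <= x k <= F)%Z -> (forall k, exists a, x k = 2*a)%Z ->
  (forall k, exists e, q * x k - x (S k) = e * N)%Z -> False.
Proof.
intros [b [Hb Hb0]] [c Hc] HF [g Hg] H1 H2 H0 Hm Hr He Hs.
assert (inv : forall k, (0 < x k /\ exists t, x k - F = 4*t) \/ (x k < 0 /\ exists t, x k - F = 4*t+2)).
{ induction k as [|k IH].
  - left; rewrite H0; split; [lia| exists 0; lia].
  - destruct (Hs k) as [e He'].
    destruct (He k) as [a Ha]. destruct (Hr k) as [r1 r2].
    assert (Hqx : q * x k = 4*(b*a) + 2*a) by (rewrite Ha Hb; ring).
    assert (L1 : 0 <= q * (F - x k)) by (apply Z.mul_nonneg_nonneg; lia).
    assert (L2 : 0 <= q * (x k + F)) by (apply Z.mul_nonneg_nonneg; lia).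
    assert (Hq1 : - (q*F) <= q * x k <= q*F) by lia.
    assert (HxS : x (S k) = q * x k - e * N) by lia.
    destruct (Hr (S k)) as [r3 r4].
    assert (Ebd : -2 < e < 2).
    { assert (e * N < 2 * N) by lia. assert (-2 * N < e*N) by lia.
      split; [apply (Z.mul_lt_mono_pos_r N); lia | apply (Z.mul_lt_mono_pos_r N); lia]. }
    assert (e = 0 \/ e = 1 \/ e = -1) as [E|[E|E]] by lia; subst e.
    + destruct IH as [[P [t T]]|[P [t T]]].
      * left; split; [lia|]. exists (t + b*a). lia.
      * right; split; [lia|]. exists (t + b*a). lia.
    + destruct IH as [[P [t T]]|[P [t T]]].
      * right; split; [lia|]. exists (t + b*a - c - 1). lia.
      * exfalso; lia.
    + destruct IH as [[P [t T]]|[P [t T]]].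
      * exfalso; lia.
      * left; split; [lia|]. exists (t + b*a + c + 1). lia. }
destruct (inv m) as [[P _]|[_ [t T]]]; lia.
Qed.
Close Scope Z_scope.

Theorem lemma29 (q m i : nat) (d : nat -> nat) :
  prime_power q -> odd q -> 2 <= m ->
  q ^ m %% 4 = 1 ->
  odd i ->
  (q ^ m - 1) %/ 2 - q ^ m.-1 < i -> i < (q ^ m + 1) %/ 2 ->
  (forall j, j < m.-1 ->
     d j = (q - 3) %/ 2 \/ d j = (q - 1) %/ 2 \/ d j = (q + 1) %/ 2) ->
  i = (q - 3) %/ 2 * q ^ m.-1 + \sum_(j < m.-1) d j * q ^ j ->
  ~ is_coset_leader q (q ^ m + 1) i.
Proof.
move=> [p [k [pp [k0 Hq]]]] oq m2 Q4 oi Hlo Hhi _ _ [_ Hlead].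
have p2 := prime_gt1 pp.
have q3 : 3 <= q.
  have : p <= q.
    rewrite Hq; case: k k0 Hq => // k' _ _; rewrite expnS.
    by apply: leq_pmulr; rewrite expn_gt0 ltnW.
  have oq2 : q %% 2 = 1 by rewrite modn2 oq.
  lia.
have m1 : m = m.-1.+1 by lia.
set P := q ^ m.-1 in Hlo *.
set Q := q ^ m in Q4 Hlo Hhi Hlead *.
have QP : Q = q * P.
  rewrite /Q /P. by rewrite -expnS -m1.
have P1 : 1 <= P by rewrite expn_gt0; lia.
have oQ : Q %% 2 = 1 by lia.
set N := Q + 1 in Hlead *.
set n := (Q + 1) %/ 2 in Hhi *.
have iN : i < N by lia.
have imod : i %% N = i by rewrite modn_small.
pose r j := (i * q ^ j) %% N.
have lead : forall j, i <= r j.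
  move=> j; rewrite -{1}imod; apply: Hlead; by exists j.
have cop : forall j, coprime N (q ^ j).
  move=> j; apply: coprimeXr.
  have : coprime N Q by rewrite /N addn1 coprimeSn.
  by rewrite /Q coprime_pexpr //; lia.
have rpos : forall j, 0 < r j.
  move=> j; rewrite lt0n; apply/negP => /eqP H.
  have : N %| i * q ^ j by rewrite /dvdn; apply/eqP.
  have oi2 : i %% 2 = 1 by rewrite modn2 oi.
  rewrite Gauss_dvdl // => /dvdn_leq; lia.
have rlt : forall j, r j < N by move=> j; rewrite /r ltn_mod; lia.
have rS : forall j, r j.+1 = (r j * q) %% N by move=> j; rewrite /r modnMml expnS; congr (_ %% _); lia.
have rsum : forall j, r j + r (j + m) = N.
  move=> j.
  have : N %| r j + r (j + m).
    rewrite /r /dvdn modnDm expnD mulnA -{1}(muln1 (i * q ^ j)) -mulnDr.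
    by rewrite -/Q addnC -/N modnMl.
  move=> /dvdnP [t Ht].
  have := rpos j; have := rlt j; have := rlt (j + m).
  case: t Ht => [|[|t]] Ht; rewrite ?mulSn ?mul0n in Ht; lia.
have H2N : 2 %| N by rewrite /N; lia.
have rodd : forall j, r j %% 2 = 1.
  move=> j; rewrite /r (modn_dvdm (i * q ^ j) H2N).
  by rewrite modn2 oddM oddX oi oq orbT.
have r0 : r 0 = i by rewrite /r expn0 muln1 imod.
have rm : r m = N - i by have := rsum 0; rewrite add0n r0; lia.
have rle : forall j, r j <= N - i by move=> j; have := rsum j; have := lead (j + m); lia.
have HQ3 : 3 * P <= Q by rewrite QP leq_mul2r q3 orbT.
have nN : N = 2 * n by rewrite /n /N; lia.
have oQ4 : Q %% 4 = 1 by [].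
have n2 : n %% 2 = 1 by rewrite /n; lia.
have oi2 : i %% 2 = 1 by rewrite modn2 oi.
have oq2 : q %% 2 = 1 by rewrite modn2 oq.
have FP : n - i <= P by move: Hlo; rewrite -/Q -/P; lia.
have qF : q * (n - i) <= Q by rewrite QP leq_mul2l FP orbT.
have q1F : (q + 1) * (n - i) <= Q + P by rewrite mulnDl mul1n; lia.
have bN : q %/ 2 * N + n = q * n.
  have Hq' : q = 2 * (q %/ 2) + 1 by lia.
  rewrite nN {2}Hq' mulnDl mul1n mulnA [q %/ 2 * 2]mulnC //.
have NQ : N = Q + 1 by [].
have nQ : n = (Q + 1) %/ 2 by [].
clearbody r n N Q P.
apply: (@core (Z.of_nat q) (Z.of_nat N) (Z.of_nat (n - i))
   (fun j => (Z.of_nat n - Z.of_nat (r j))%Z) m).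
- exists (Z.of_nat (q %/ 2)); lia.
- exists (Z.of_nat (Q %/ 4)); lia.
- lia.
- exists (Z.of_nat ((n - i) %/ 2)); lia.
- lia.
- lia.
- rewrite r0; lia.
- rewrite rm; lia.
- move=> j; have := lead j; have := rle j; lia.
- move=> j; exists (Z.of_nat (n %/ 2) - Z.of_nat (r j %/ 2))%Z; have := rodd j; lia.
- move=> j; exists (Z.of_nat (q %/ 2) - Z.of_nat ((r j * q) %/ N))%Z.
  have := rS j; have := divn_eq (r j * q) N; lia.
Qed.
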